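(* Let $S\subseteq\mathbb{S}$ be nonempty with $1\notin S$, and let $i^*=\min S$ be the highest-quality product in $S$. Then $\overline{re}\big((S\setminus\{i^*\})\cup\{1\}\big)\ge\overline{re}(S)$. In particular, there is a revenue-maximizing displayed set that contains product $1$.
   Context: Market model: sellers $\mathbb{S}=\{1,\dots,n\}$, product qualities $\theta_1\ge\theta_2\ge\dots\ge\theta_n\ge0$. For displayed set $S$ and prices $p_i\ge0$: $a_i=e^{\theta_i-p_i}$, MNL demand $q_i=a_i/(1+\sum_{j\in S}a_j)$; sellers in $S$ play the Bertrand game (seller $i$ chooses $p_i\ge0$ to maximize $p_iq_i$). $V:(0,\infty)\to(0,1)$: $V(x)=$ the unique $v\in(0,1)$ with $v\exp(v/(1-v))=x$. For nonempty $S$, $\bar q_0(S)\in(0,1)$ is the unique solution of $\sum_{i\in S}V(\bar q_0e^{\theta_i-1})=1-\bar q_0$, and $\bar q_i(S)=V(\bar q_0(S)e^{\theta_i-1})$ are the equilibrium demands. The equilibrium revenue is $\overline{re}(S)=\sum_{i\in S}\frac{\bar q_i(S)}{1-\bar q_i(S)}$, with $\overline{re}(\emptyset)=0$. *)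

(* Defs.v *)
From Stdlib Require Import Reals Lra Lia List Arith ClassicalEpsilon.
Import ListNotations.
Open Scope R_scope.

Definition lsum (f : nat -> R) (S : list nat) : R :=
  fold_right (fun i acc => f i + acc) 0 S.

Definition V (x : R) : R :=
  epsilon (inhabits 0) (fun v => 0 < v < 1 /\ v * exp (v / (1 - v)) = x).

Definition qbar0 (theta : nat -> R) (S : list nat) : R :=
  epsilon (inhabits 0)
    (fun q => 0 < q < 1 /\
       lsum (fun i => V (q * exp (theta i - 1))) S = 1 - q).

Definition qbar (theta : nat -> R) (S : list nat) (i : nat) : R :=
  V (qbar0 theta S * exp (theta i - 1)).

Definition re (theta : nat -> R) (S : list nat) : R :=
  match S with
  | [] => 0
  | _ => lsum (fun i => qbar theta S i / (1 - qbar theta S i)) S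
  end.

Definition displayed (n : nat) (S : list nat) : Prop :=
  NoDup S /\ forall i, In i S -> (1 <= i <= n)%nat.

(* Main.v *)
Require Import Defs.
From Stdlib Require Import Reals Lra Lia List Arith ClassicalEpsilon Classical Ranalysis5.
Import ListNotations.
Open Scope R_scope.

Definition h (v : R) := v * exp (v / (1 - v)).

Lemma frac_lt u v : 0 <= u -> u < v -> v < 1 -> u / (1-u) < v / (1-v).
Proof.
  intros. replace (u/(1-u)) with (/(1-u) - 1) by (field; lra).
  replace (v/(1-v)) with (/(1-v) - 1) by (field; lra).
  assert (/(1-u) < /(1-v)). { apply Rinv_lt_contravar; nra. } lra.
Qed.

Lemma h_lt u v : 0 <= u -> u < v -> v < 1 -> h u < h v.
Proof.
  intros. unfold h.
  assert (E: exp (u/(1-u)) < exp (v/(1-v))) by (apply exp_increasing; apply frac_lt; lra).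
  assert (0 < exp (u/(1-u))) by apply exp_pos. nra.
Qed.

Lemma h_le u v : 0 <= u -> u <= v -> v < 1 -> h u <= h v.
Proof. intros. destruct (Req_dec u v). subst; lra. left; apply h_lt; lra. Qed.

Lemma h0 : h 0 = 0.
Proof. unfold h. ring. Qed.

Lemma h_cont a : a < 1 -> continuity_pt h a.
Proof.
  intros Ha. unfold h.
  apply continuity_pt_mult.
  - apply derivable_continuous_pt, derivable_pt_id.
  - change (fun x => exp (x / (1 - x))) with (comp exp (fun x => x / (1-x))).
    apply continuity_pt_comp.
    + apply continuity_pt_div.
      * apply derivable_continuous_pt, derivable_pt_id.
      * apply continuity_pt_minus. apply continuity_pt_const; intros x y; reflexivity.
        apply derivable_continuous_pt, derivable_pt_id.
      * lra.
    + apply derivable_continuous_pt, derivable_pt_exp.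
Qed.

Lemma V_ex x : 0 < x -> exists v, 0 < v < 1 /\ v * exp (v / (1 - v)) = x.
Proof.
  intros Hx. set (c := (x+1)/(x+2)).
  assert (Hc : 0 < c < 1). { unfold c; split. apply Rdiv_lt_0_compat; lra.
    apply Rmult_lt_reg_r with (x+2). lra. field_simplify; lra. }
  assert (Hcc : c / (1-c) = x+1). { unfold c. field. lra. }
  destruct (IVT_interv (fun v => h v - x) 0 c) as [z [Hz1 Hz2]].
  - intros a Ha. apply continuity_pt_minus. apply h_cont; lra.
    apply continuity_pt_const; intros u w; reflexivity.
  - lra.
  - rewrite h0; lra.
  - unfold h. rewrite Hcc. pose proof (exp_ineq1 (x+1)).
    assert (c*(x+2) = x+1) by (unfold c; field; lra). assert (x+1<>0) by lra. nra.
  - exists z. assert (z <> 0). { intro; subst. rewrite h0 in Hz2. lra. }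
    split. lra. unfold h in Hz2. lra.
Qed.

Lemma V_spec x : 0 < x -> 0 < V x < 1 /\ h (V x) = x.
Proof.
  intros Hx. unfold V. apply epsilon_spec. apply V_ex; auto.
Qed.

Lemma V_mono x y : 0 < x -> x <= y -> V x <= V y.
Proof.
  intros. destruct (V_spec x) as [[? ?] Ex]; auto. destruct (V_spec y) as [[? ?] Ey]; lra || auto.
  destruct (Rle_dec (V x) (V y)) as [|Hn]; auto.
  assert (h (V y) < h (V x)) by (apply h_lt; lra). lra.
Qed.

Lemma V_le x : 0 < x -> V x <= x.
Proof.
  intros. destruct (V_spec x) as [[? ?] Ex]; auto. unfold h in Ex.
  assert (1 <= exp (V x / (1 - V x))).
  { pose proof (exp_ineq1_le (V x / (1 - V x))).
    assert (0 <= V x / (1 - V x)) by (apply Rle_mult_inv_pos; lra). lra. }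
  nra.
Qed.

Lemma V_cont x0 : 0 < x0 -> continuity_pt V x0.
Proof.
  intros Hx0 eps Heps. destruct (V_spec x0) as [[Hv0 Hv1] E0]; auto.
  set (v0 := V x0) in *.
  set (d := Rmin (eps/2) (Rmin (v0/2) ((1-v0)/2))).
  assert (Hd : 0 < d /\ d <= eps/2 /\ d <= v0/2 /\ d <= (1-v0)/2).
  { unfold d. repeat split;
    repeat (apply Rmin_glb_lt || apply Rmin_pos); try lra;
    unfold Rmin; repeat destruct Rle_dec; lra. }
  assert (Hm : h (v0 - d) < x0) by (rewrite <- E0; apply h_lt; lra).
  assert (Hp : x0 < h (v0 + d)) by (rewrite <- E0; apply h_lt; lra).
  assert (Hm0 : 0 < h (v0 - d)) by (rewrite <- h0; apply h_lt; lra).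
  exists (Rmin (x0 - h (v0 - d)) (h (v0+d) - x0)). split.
  - apply Rmin_pos; lra.
  - intros x [_ Hx]. simpl in *. unfold R_dist in *.
    assert (Hm1 := Rmin_l (x0 - h (v0 - d)) (h (v0+d) - x0)).
    assert (Hp1 := Rmin_r (x0 - h (v0 - d)) (h (v0+d) - x0)).
    apply Rabs_def2 in Hx. destruct Hx.
    assert (Hxp : 0 < x) by lra.
    destruct (V_spec x) as [[? ?] Ex]; auto.
    assert (v0 - d < V x).
    { destruct (Rlt_dec (v0 - d) (V x)); auto.
      assert (h (V x) <= h (v0 - d)) by (apply h_le; lra). lra. }
    assert (V x < v0 + d).
    { destruct (Rlt_dec (V x) (v0 + d)); auto.
      assert (h (v0 + d) <= h (V x)) by (apply h_le; lra). lra. }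
    apply Rabs_def1; lra.
Qed.

Lemma lsum_le f g L : (forall i, In i L -> f i <= g i) -> lsum f L <= lsum g L.
Proof. induction L; simpl; intros; [lra|]. specialize (IHL (fun i Hi => H i (or_intror Hi))).
  specialize (H a (or_introl eq_refl)). lra. Qed.

Lemma lsum_minus f g L : lsum (fun i => f i - g i) L = lsum f L - lsum g L.
Proof. induction L; simpl; [ring|]. rewrite IHL; ring. Qed.

Lemma lsum_scal c f L : lsum (fun i => f i * c) L = lsum f L * c.
Proof. induction L; simpl; [ring|]. rewrite IHL; ring. Qed.

Lemma lsum_remove f a L : In a L -> NoDup L -> lsum f L = f a + lsum f (remove Nat.eq_dec a L).
Proof.
  induction L as [|b L IH]; simpl; intros Hin Hnd; [contradiction|].
  inversion Hnd; subst. destruct (Nat.eq_dec a b) as [->|Hab].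
  - rewrite notin_remove; auto.
  - destruct Hin as [->|Hin]; [congruence|]. simpl. rewrite IH; auto. ring.
Qed.

Lemma lsum_cont theta L q : 0 < q ->
  continuity_pt (fun q => lsum (fun i => V (q * exp (theta i - 1))) L) q.
Proof.
  intros Hq. induction L as [|a L IH]; simpl.
  - apply continuity_pt_const. intros x y; reflexivity.
  - apply (continuity_pt_plus (fun q => V (q * exp (theta a - 1)))); auto.
    change (fun q0 => V (q0 * exp (theta a - 1))) with (comp V (fun q0 => q0 * exp (theta a - 1))).
    apply continuity_pt_comp.
    + apply continuity_pt_mult. apply derivable_continuous_pt, derivable_pt_id.
      apply continuity_pt_const. intros x y; reflexivity.
    + apply V_cont. pose proof (exp_pos (theta a - 1)). nra.
Qed.

Lemma lsum_Vle theta L q : 0 < q ->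
  lsum (fun i => V (q * exp (theta i - 1))) L <= q * lsum (fun i => exp (theta i - 1)) L.
Proof.
  intros Hq. induction L as [|a L IH]; simpl; [lra|].
  pose proof (V_le (q * exp (theta a - 1))). pose proof (exp_pos (theta a - 1)).
  assert (V (q * exp (theta a - 1)) <= q * exp (theta a - 1)) by (apply H; nra). nra.
Qed.

Lemma lsum_exp_pos theta L : 0 <= lsum (fun i => exp (theta i - 1)) L.
Proof. induction L; simpl; [lra|]. pose proof (exp_pos (theta a - 1)); lra. Qed.

Lemma lsum_Vpos theta L q : 0 < q -> L <> [] ->
  0 < lsum (fun i => V (q * exp (theta i - 1))) L.
Proof.
  intros Hq. induction L as [|a L IH]; simpl; intros; [congruence|].
  assert (0 < V (q * exp (theta a - 1))).
  { apply V_spec. pose proof (exp_pos (theta a - 1)). nra. }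
  destruct L. simpl; lra. assert (n :: L <> []) by congruence. specialize (IH H1). lra.
Qed.

Lemma qbar0_ex theta L : L <> [] -> exists q, 0 < q < 1 /\
       lsum (fun i => V (q * exp (theta i - 1))) L = 1 - q.
Proof.
  intros HL. set (s := lsum (fun i => exp (theta i - 1)) L).
  assert (Hs : 0 <= s) by apply lsum_exp_pos.
  set (a := / (2 + 2 * s)).
  assert (Ha : 0 < a <= 1/2).
  { unfold a. split. apply Rinv_0_lt_compat; lra.
    apply Rmult_le_reg_r with (2+2*s). lra. rewrite Rinv_l by lra. nra. }
  assert (Has : a * s < 1/2).
  { unfold a. apply Rmult_lt_reg_r with (2+2*s). lra.
    replace (/ (2 + 2 * s) * s * (2 + 2 * s)) with s by (field; lra). lra. }
  destruct (IVT_interv (fun q => q + lsum (fun i => V (q * exp (theta i - 1))) L - 1) a 1)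
    as [z [Hz1 Hz2]].
  - intros b Hb. apply continuity_pt_minus.
    apply continuity_pt_plus. apply derivable_continuous_pt, derivable_pt_id.
    apply lsum_cont; lra. apply continuity_pt_const; intros x y; reflexivity.
  - lra.
  - pose proof (lsum_Vle theta L a (proj1 Ha)). fold s in H. lra.
  - pose proof (lsum_Vpos theta L 1 ltac:(lra) HL). lra.
  - exists z. assert (z <> 1). { intro; subst. pose proof (lsum_Vpos theta L 1 ltac:(lra) HL). lra. }
    split. lra. lra.
Qed.

Lemma qbar0_spec theta L : L <> [] -> 0 < qbar0 theta L < 1 /\
       lsum (fun i => V (qbar0 theta L * exp (theta i - 1))) L = 1 - qbar0 theta L.
Proof. intros. unfold qbar0. apply epsilon_spec. apply qbar0_ex; auto. Qed.

Lemma gdiff_up b' b a : 0 < b' <= b -> b <= a < 1 ->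
  b/(1-b) - b'/(1-b') <= (b-b') * /((1-a)*(1-a)).
Proof.
  intros. replace (b/(1-b) - b'/(1-b')) with ((b-b') * /((1-b)*(1-b'))) by (field; lra).
  apply Rmult_le_compat_l. lra. apply Rinv_le_contravar. nra. nra.
Qed.

Lemma gdiff_low a a' : 0 < a <= a' -> a' < 1 ->
  (a'-a) * /((1-a)*(1-a)) <= a'/(1-a') - a/(1-a).
Proof.
  intros. replace (a'/(1-a') - a/(1-a)) with ((a'-a) * /((1-a)*(1-a'))) by (field; lra).
  apply Rmult_le_compat_l. lra. apply Rinv_le_contravar. nra. nra.
Qed.

Lemma re_ne theta L : L <> [] -> re theta L = lsum (fun i => qbar theta L i / (1 - qbar theta L i)) L.
Proof. destruct L; [congruence|reflexivity]. Qed.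

Lemma part1 (n : nat) (theta : nat -> R)
  (Hmono : forall i j : nat, (1 <= i)%nat -> (i <= j)%nat -> (j <= n)%nat -> theta j <= theta i)
  (S : list nat) (istar : nat)
  (HS : displayed n S) (Hne : S <> []) 
  (Histar : In istar S) (Hmin : forall j, In j S -> (istar <= j)%nat) :
  re theta (1%nat :: remove Nat.eq_dec istar S) >= re theta S.
Proof.
  destruct HS as [Hnd Hrng].
  set (R0 := remove Nat.eq_dec istar S).
  set (S' := (1%nat :: R0)).
  assert (HS' : S' <> []) by discriminate.
  set (c := fun i => exp (theta i - 1)).
  assert (Hc : forall i, 0 < c i) by (intros; apply exp_pos).
  assert (Hcj : forall j, In j S -> c j <= c istar).
  { intros j Hj. unfold c. destruct (Rle_lt_or_eq_dec _ _ (Hmono istar j ltac:(apply Hrng in Histar; lia) (Hmin j Hj) ltac:(apply Hrng in Hj; lia))) as [Hl|He].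
    left; apply exp_increasing; lra. rewrite He; lra. }
  assert (Hc1 : c istar <= c 1%nat).
  { unfold c. destruct (Rle_lt_or_eq_dec _ _ (Hmono 1%nat istar ltac:(lia) ltac:(apply Hrng in Histar; lia) ltac:(apply Hrng in Histar; lia))) as [Hl|He].
    left; apply exp_increasing; lra. rewrite He; lra. }
  destruct (qbar0_spec theta S Hne) as [Hq Eq].
  destruct (qbar0_spec theta S' HS') as [Hq' Eq'].
  set (q := qbar0 theta S) in *. set (q' := qbar0 theta S') in *.
  rewrite (lsum_remove _ istar S Histar Hnd) in Eq. fold R0 in Eq.
  unfold S' in Eq'. simpl in Eq'. change (exp (theta istar - 1)) with (c istar) in Eq.
  change (fun i => V (q * exp (theta i - 1))) with (fun i => V (q * c i)) in Eq.
  change (exp (theta 1%nat - 1)) with (c 1%nat) in Eq'.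
  change (fun i => V (q' * exp (theta i - 1))) with (fun i => V (q' * c i)) in Eq'.
  assert (Hmono' : forall x y, 0 < x -> x <= y -> V x <= V y) by apply V_mono.
  assert (HR : forall j, In j R0 -> In j S) by (intros j Hj; apply in_remove in Hj; tauto).
  assert (Hqq : q' <= q).
  { destruct (Rle_lt_dec q' q) as [|Hlt]; auto.
    assert (V (q * c istar) <= V (q' * c 1%nat)).
    { apply V_mono. pose proof (Hc istar); nra. apply Rmult_le_compat; try lra. left; apply Hc. }
    assert (lsum (fun i => V (q * c i)) R0 <= lsum (fun i => V (q' * c i)) R0).
    { apply lsum_le. intros j Hj. apply V_mono. pose proof (Hc j); nra.
      apply Rmult_le_compat_r. left; apply Hc. lra. }
    lra. }
  set (a := V (q * c istar)). set (a' := V (q' * c 1%nat)).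
  assert (Ha : 0 < a < 1) by (apply V_spec; pose proof (Hc istar); nra).
  assert (Ha' : 0 < a' < 1) by (apply V_spec; pose proof (Hc 1%nat); nra).
  fold a in Eq. fold a' in Eq'.
  assert (Hdiff : a' - a = (q - q') + (lsum (fun i => V (q * c i)) R0 - lsum (fun i => V (q' * c i)) R0)) by lra.
  assert (Hbb : forall j, In j R0 -> 0 < V (q' * c j) <= V (q * c j) /\ V (q * c j) <= a).
  { intros j Hj. split; [split|].
    - apply V_spec. pose proof (Hc j); nra.
    - apply V_mono. pose proof (Hc j); nra. apply Rmult_le_compat_r. left; apply Hc. lra.
    - apply V_mono. pose proof (Hc j); nra. apply Rmult_le_compat_l. lra. apply Hcj. auto. }
  assert (Hsum : 0 <= lsum (fun i => V (q * c i)) R0 - lsum (fun i => V (q' * c i)) R0).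
  { rewrite <- lsum_minus. replace 0 with (lsum (fun _ => 0) R0).
    apply lsum_le. intros j Hj. specialize (Hbb j Hj). lra.
    clear. induction R0; simpl; auto; lra. }
  set (K := / ((1-a)*(1-a))).
  assert (HK : 0 < K) by (apply Rinv_0_lt_compat; nra).
  rewrite (re_ne theta S Hne), (re_ne theta S' HS').
  rewrite (lsum_remove _ istar S Histar Hnd). fold R0. unfold S' at 3. simpl.
  unfold qbar. fold q q'.
  change (exp (theta 1%nat - 1)) with (c 1%nat). change (exp (theta istar - 1)) with (c istar).
  change (fun i => V (q' * exp (theta i - 1)) / (1 - V (q' * exp (theta i - 1)))) with (fun i => V (q' * c i) / (1 - V (q' * c i))).
  change (fun i => V (q * exp (theta i - 1)) / (1 - V (q * exp (theta i - 1)))) with (fun i => V (q * c i) / (1 - V (q * c i))).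
  fold a a'.
  assert (H1 : (a'-a) * K <= a'/(1-a') - a/(1-a)) by (apply gdiff_low; lra).
  assert (H2 : lsum (fun i => V (q * c i) / (1 - V (q * c i)) - V (q' * c i) / (1 - V (q' * c i))) R0
          <= lsum (fun i => (V (q * c i) - V (q' * c i)) * K) R0).
  { apply lsum_le. intros j Hj. specialize (Hbb j Hj). apply gdiff_up; lra. }
  rewrite lsum_minus, lsum_scal, lsum_minus in H2.
  assert ((lsum (fun i => V (q * c i)) R0 - lsum (fun i => V (q' * c i)) R0) * K <= (a'-a)*K).
  { apply Rmult_le_compat_r; lra. }
  lra.
Qed.

Lemma NoDup_rem a L : NoDup L -> NoDup (remove Nat.eq_dec a L).
Proof.
  induction L as [|b L IH]; simpl; intros H; auto. inversion H; subst.
  destruct (Nat.eq_dec a b); auto. constructor; auto.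
  intro Hi. apply in_remove in Hi. tauto.
Qed.

Lemma list_min L : L <> [] -> exists m, In m L /\ forall j, In j L -> (m <= j)%nat.
Proof.
  induction L as [|a L IH]; intros H; [congruence|].
  destruct L as [|b L'].
  - exists a. split; simpl; auto. intros j [->|[]]; lia.
  - destruct IH as [m [Hm Hj]]; [discriminate|].
    destruct (le_lt_dec a m).
    + exists a. split; simpl; auto. intros j [->|Hj']; [lia|]. specialize (Hj j Hj'); lia.
    + exists m. split; simpl; auto. intros j [->|Hj']; [lia|]. auto.
Qed.

Fixpoint allL (m k : nat) : list (list nat) :=
  match k with
  | O => [[]]
  | S k' => [] :: flat_map (fun i => map (cons i) (allL m k')) (seq 1 m)
  end.

Lemma allL_in m k : forall U, (length U <= k)%nat -> (forall i, In i U -> In i (seq 1 m)) -> In U (allL m k).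
Proof.
  induction k as [|k IH]; intros U HU Hi; destruct U as [|x U]; simpl in *; auto; try lia.
  right. apply in_flat_map. exists x. split; auto. apply in_map. apply IH. lia. auto.
Qed.

Lemma argmax (P : list nat -> Prop) (r : list nat -> R) C :
  (exists x, In x C /\ P x) -> exists T, P T /\ forall U, In U C -> P U -> r U <= r T.
Proof.
  induction C as [|a C IH]; intros [x [Hx Px]]; [destruct Hx|].
  destruct (classic (exists y, In y C /\ P y)) as [Hy|Hy].
  - destruct (IH Hy) as [T [PT HT]].
    destruct (classic (P a /\ r T < r a)) as [Ha|Ha].
    + exists a. split; [tauto|]. intros U [Heq|HU] PU; [subst; lra|]. specialize (HT U HU PU). lra.
    + exists T. split; auto. intros U [Heq|HU] PU; auto. subst U.
      destruct (Rle_lt_dec (r a) (r T)); auto. exfalso; apply Ha; auto.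
  - exists a. destruct Hx as [<-|Hx]; [|exfalso; apply Hy; eauto].
    split; auto. intros U [Heq|HU] PU; [subst; lra|]. exfalso; apply Hy; eauto.
Qed.

Lemma lsum_nonneg f L : (forall i, In i L -> 0 <= f i) -> 0 <= lsum f L.
Proof.
  intros H. replace 0 with (lsum (fun _ => 0) L). apply lsum_le; auto.
  clear. induction L; simpl; auto; lra.
Qed.

Lemma re_nonneg theta L : 0 <= re theta L.
Proof.
  destruct L as [|a L']; [simpl; lra|]. rewrite re_ne by discriminate.
  set (L := a :: L'). assert (HL : L <> []) by discriminate.
  destruct (qbar0_spec theta L HL) as [Hq _].
  apply lsum_nonneg. intros b _.
  assert (0 < qbar theta L b < 1).
  { unfold qbar. apply V_spec. pose proof (exp_pos (theta b - 1)); nra. }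
  apply Rle_mult_inv_pos; lra.
Qed.

Theorem lemma4 (n : nat) (theta : nat -> R)
  (Hmono : forall i j : nat, (1 <= i)%nat -> (i <= j)%nat -> (j <= n)%nat -> theta j <= theta i)
  (Hnonneg : forall i : nat, (1 <= i <= n)%nat -> 0 <= theta i)
  (S : list nat) (istar : nat)
  (HS : displayed n S) (Hne : S <> []) (H1 : ~ In 1%nat S)
  (Histar : In istar S) (Hmin : forall j, In j S -> (istar <= j)%nat) :
  re theta (1%nat :: remove Nat.eq_dec istar S) >= re theta S /\
  exists T : list nat, displayed n T /\ In 1%nat T /\
    forall U : list nat, displayed n U -> re theta U <= re theta T.
Proof.
  split. { eapply part1; eauto. }
  assert (Hn : (1 <= n)%nat) by (destruct HS as [_ Hr]; apply Hr in Histar; lia).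
  assert (Hall : forall U, displayed n U -> In U (allL n n)).
  { intros U [Hnd Hr].
    assert (Hincl : incl U (seq 1 n)). { intros i Hi. apply in_seq. apply Hr in Hi. lia. }
    apply allL_in; auto. pose proof (NoDup_incl_length Hnd Hincl). rewrite length_seq in H. lia. }
  destruct (argmax (displayed n) (re theta) (allL n n)) as [T [HT HTmax]].
  { exists S. split; auto. }
  assert (Hmax : forall U, displayed n U -> re theta U <= re theta T) by (intros; apply HTmax; auto).
  assert (D1 : forall L, displayed n L -> ~ In 1%nat L -> displayed n (1%nat :: L)).
  { intros L [Hnd Hr] Hn1. split. constructor; auto. intros i [<-|Hi]; auto; lia. }
  destruct T as [|t T'] eqn:ET.
  - exists [1%nat]. split. apply D1. split. constructor. simpl; tauto. simpl; tauto.
    split. simpl; auto. intros U HU. specialize (Hmax U HU). simpl in Hmax.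
    pose proof (re_nonneg theta [1%nat]). lra.
  - rewrite <- ET in *. destruct (classic (In 1%nat T)) as [HT1|HT1].
    + exists T. auto.
    + assert (HTne : T <> []) by (rewrite ET; discriminate).
      destruct (list_min T HTne) as [m [Hm Hmm]].
      exists (1%nat :: remove Nat.eq_dec m T). split; [|split].
      * apply D1. split. apply NoDup_rem, HT. intros i Hi. apply in_remove in Hi. apply HT; tauto.
        intro Hi. apply in_remove in Hi. tauto.
      * simpl; auto.
      * intros U HU. pose proof (part1 n theta Hmono T m HT HTne Hm Hmm). specialize (Hmax U HU). lra.
Qed.
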